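(* Let $(\mathbf{x}^1,y_l^1,y_r^1),\dots,(\mathbf{x}^T,y_l^T,y_r^T)$ be a sequence of examples with $\mathbf{x}^t\in\mathbb{R}^d$ and integers $1\le y_l^t\le y_r^t\le K$, presented to the PA algorithm started from $\mathbf{w}^1=\mathbf{0}$, $\boldsymbol\theta^1=\mathbf{0}$. Let $\mathbf{v}^*=(\mathbf{u}^*,\mathbf{b}^* )$, $\mathbf{u}^*\in\mathbb{R}^d$, $\mathbf{b}^*\in\mathbb{R}^{K-1}$, be an ideal classifier: $\mathbf{u}^*\cdot\mathbf{x}^t-b_i^*\ge1$ for all $i\in\{1,\dots,y_l^t-1\}$ and all $t\in[T]$, and $\mathbf{u}^*\cdot\mathbf{x}^t-b_i^*\le-1$ for all $i\in\{y_r^t,\dots,K-1\}$ and all $t\in[T]$. Let $c=\min_{t\in[T]}(y_r^t-y_l^t)$ and $R^2=\max_{t\in[T]}\Vert\mathbf{x}^t\Vert^2$. Then $$\sum_{t=1}^T\sum_{i=1}^{K-1}(l_i^t)^2\le\Vert\mathbf{v}^*\Vert^2\left(1+R^2(K-c-1)\right),$$ where $\Vert\mathbf{v}^*\Vert^2=\Vert\mathbf{u}^*\Vert^2+\Vert\mathbf{b}^*\Vert^2$.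
   Context: PA algorithm: at trial $t$, $(\mathbf{w}^{t+1},\boldsymbol\theta^{t+1})$ is the unique minimizer of $\tfrac12\Vert\mathbf{w}-\mathbf{w}^t\Vert^2+\tfrac12\Vert\boldsymbol\theta-\boldsymbol\theta^t\Vert^2$ subject to $\mathbf{w}\cdot\mathbf{x}^t-\theta_i\ge1$ for $i=1,\dots,y_l^t-1$ and $\mathbf{w}\cdot\mathbf{x}^t-\theta_i\le-1$ for $i=y_r^t,\dots,K-1$. Losses: $l_i^t=\max(0,1+\theta_i^t-\mathbf{w}^t\cdot\mathbf{x}^t)$ for $1\le i\le y_l^t-1$, $l_i^t=\max(0,1+\mathbf{w}^t\cdot\mathbf{x}^t-\theta_i^t)$ for $y_r^t\le i\le K-1$, and $l_i^t=0$ for $y_l^t\le i\le y_r^t-1$. *)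

(* Defs.v *)
From mathcomp Require Import all_boot all_order all_algebra.
Set Implicit Arguments. Unset Strict Implicit. Unset Printing Implicit Defensive.
Import Order.TTheory GRing.Theory Num.Theory.
Local Open Scope ring_scope.

(* Threshold index j : 'I_(K-1) stands for
   the paper's 1-based index i = j+1. Trials are 0-based: trial t (t < T)
   of the paper is trial t+1; w t, theta t are w^{t+1}, theta^{t+1}. *)

Definition dot (R : realFieldType) (n : nat) (u v : 'rV[R]_n) : R :=
  \sum_(i < n) u 0 i * v 0 i.

Definition normsq (R : realFieldType) (n : nat) (u : 'rV[R]_n) : R := dot u u.

Definition pa_feasible (R : realFieldType) (d K : nat)
  (x : 'rV[R]_d) (yl yr : nat) (w : 'rV[R]_d) (th : 'rV[R]_(K - 1)) : Prop :=
  forall j : 'I_(K - 1),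
    ((j.+1 < yl)%N -> dot w x - th 0 j >= 1) /\
    ((yr <= j.+1)%N -> dot w x - th 0 j <= -1).

Definition pa_objective (R : realFieldType) (d K : nat)
  (w : 'rV[R]_d) (th : 'rV[R]_(K - 1)) (w' : 'rV[R]_d) (th' : 'rV[R]_(K - 1)) : R :=
  2^-1 * normsq (w' - w) + 2^-1 * normsq (th' - th).

Definition pa_step (R : realFieldType) (d K : nat)
  (x : 'rV[R]_d) (yl yr : nat) (w : 'rV[R]_d) (th : 'rV[R]_(K - 1))
  (w' : 'rV[R]_d) (th' : 'rV[R]_(K - 1)) : Prop :=
  pa_feasible x yl yr w' th' /\
  forall w'' th'', pa_feasible x yl yr w'' th'' ->
    pa_objective w th w' th' <= pa_objective w th w'' th''.

Definition pa_loss (R : realFieldType) (d K : nat)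
  (x : 'rV[R]_d) (yl yr : nat) (w : 'rV[R]_d) (th : 'rV[R]_(K - 1))
  (j : 'I_(K - 1)) : R :=
  if (j.+1 < yl)%N then Num.max 0 (1 + th 0 j - dot w x)
  else if (yr <= j.+1)%N then Num.max 0 (1 + dot w x - th 0 j)
  else 0.

(* Main.v *)
Require Import Defs.
From mathcomp Require Import all_boot all_order all_algebra ring lra zify.
Import Order.TTheory GRing.Theory Num.Theory.
Set Implicit Arguments. Unset Strict Implicit. Unset Printing Implicit Defensive.
Local Open Scope ring_scope.

Section Dot.
Variables (R : realFieldType) (n : nat).
Implicit Types u v z : 'rV[R]_n.

Lemma dotC u v : dot u v = dot v u.
Proof. by rewrite /dot; apply: eq_bigr => i _; rewrite mulrC. Qed.
Lemma dotDl u v z : dot (u + v) z = dot u z + dot v z.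
Proof. by rewrite /dot -big_split; apply: eq_bigr => i _; rewrite mxE mulrDl. Qed.
Lemma dotNl u z : dot (- u) z = - dot u z.
Proof. by rewrite /dot -sumrN; apply: eq_bigr => i _; rewrite mxE mulNr. Qed.
Lemma dotZl a u z : dot (a *: u) z = a * dot u z.
Proof. by rewrite /dot mulr_sumr; apply: eq_bigr => i _; rewrite mxE mulrA. Qed.
Lemma dotBl u v z : dot (u - v) z = dot u z - dot v z.
Proof. by rewrite dotDl dotNl. Qed.
Lemma dotDr u v z : dot z (u + v) = dot z u + dot z v.
Proof. by rewrite dotC dotDl !(dotC z). Qed.
Lemma dotNr u z : dot z (- u) = - dot z u.
Proof. by rewrite dotC dotNl dotC. Qed.
Lemma dotZr a u z : dot z (a *: u) = a * dot z u.
Proof. by rewrite dotC dotZl dotC. Qed.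
Lemma normsq_ge0 u : 0 <= normsq u.
Proof. by apply: sumr_ge0 => i _; rewrite -expr2 sqr_ge0. Qed.
Lemma normsqD u v : normsq (u + v) = normsq u + 2 * dot u v + normsq v.
Proof. rewrite /normsq !dotDl !dotDr (dotC v u); ring. Qed.
Lemma normsqZ a u : normsq (a *: u) = a ^+ 2 * normsq u.
Proof. rewrite /normsq dotZl dotZr; ring. Qed.
Lemma normsqN u : normsq (- u) = normsq u.
Proof. by rewrite /normsq dotNl dotNr opprK. Qed.
Lemma normsq0 : normsq (0 : 'rV[R]_n) = 0.
Proof. by rewrite /normsq /dot big1 // => i _; rewrite mxE mul0r. Qed.

Lemma quad_cs (A B C : R) : 0 <= A -> (forall y, 0 <= A * y ^+ 2 + 2 * C * y + B) ->
  C ^+ 2 <= A * B.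
Proof.
move=> A0 H; have B0 : 0 <= B by have := H 0; rewrite expr0n /=; lra.
case: (eqVneq A 0) => [Ae|Anz].
  rewrite Ae.
  case: (eqVneq C 0) => [->|Cnz]; first by rewrite expr0n mul0r.
  have := H (- (B + 1) / (2 * C)); set y := (- (B + 1) / (2 * C)) => Hy.
  have e : 2 * C * y = - (B + 1) by rewrite /y; field.
  move: Hy; rewrite Ae mul0r e; lra.
have Ap : 0 < A by rewrite lt0r Anz.
have := H (- C / A).
have -> : A * (- C / A) ^+ 2 + 2 * C * (- C / A) + B = B - C ^+ 2 / A.
  by field.
by rewrite subr_ge0 ler_pdivrMr // mulrC.
Qed.

Lemma cs u v : dot u v ^+ 2 <= normsq u * normsq v.
Proof.
rewrite mulrC; apply: quad_cs; first exact: normsq_ge0.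
move=> y; have := normsq_ge0 (u + y *: v).
rewrite normsqD normsqZ dotZr; lra.
Qed.
End Dot.

Lemma feas_conv (R : realFieldType) d K x yl yr (w : 'rV[R]_d) (th : 'rV[R]_(K-1)) u b l :
  0 <= l <= 1 -> pa_feasible x yl yr w th -> pa_feasible x yl yr u b ->
  pa_feasible x yl yr (w + l *: (u - w)) (th + l *: (b - th)).
Proof.
move=> /andP[l0 l1] Hw Hu j.
have -> : dot (w + l *: (u - w)) x - (th + l *: (b - th)) 0 j =
   (1 - l) * (dot w x - th 0 j) + l * (dot u x - b 0 j).
  rewrite dotDl dotZl dotBl !mxE; ring.
have [Hw1 Hw2] := Hw j; have [Hu1 Hu2] := Hu j.
split=> h.
  have := Hw1 h; have := Hu1 h => a1 a2.
  have : 0 <= (1 - l) * (dot w x - th 0 j - 1) by apply: mulr_ge0; lra.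
  have : 0 <= l * (dot u x - b 0 j - 1) by apply: mulr_ge0; lra.
  lra.
have := Hw2 h; have := Hu2 h => a1 a2.
have : 0 <= (1 - l) * (-1 - (dot w x - th 0 j)) by apply: mulr_ge0; lra.
have : 0 <= l * (-1 - (dot u x - b 0 j)) by apply: mulr_ge0; lra.
lra.
Qed.

Lemma proj_step (R : realFieldType) d K x yl yr (w : 'rV[R]_d) (th : 'rV[R]_(K-1)) w' th' u b :
  pa_step x yl yr w th w' th' -> pa_feasible x yl yr u b ->
  normsq (w' - u) + normsq (th' - b) + (normsq (w' - w) + normsq (th' - th))
    <= normsq (w - u) + normsq (th - b).
Proof.
move=> [Hf Hmin] Hu.
set p := dot (w' - w) (u - w') + dot (th' - th) (b - th').
set q := normsq (u - w') + normsq (b - th').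
have q0 : 0 <= q by rewrite /q; have := normsq_ge0 (u - w'); have := normsq_ge0 (b - th'); lra.
have Hl : forall l, 0 <= l <= 1 -> 0 <= l * (2 * p + l * q).
  move=> l hl; have := Hmin _ _ (feas_conv hl Hf Hu).
  rewrite /pa_objective.
  have -> : w' + l *: (u - w') - w = (w' - w) + l *: (u - w') by rewrite addrAC.
  have -> : th' + l *: (b - th') - th = (th' - th) + l *: (b - th') by rewrite addrAC.
  rewrite !normsqD !normsqZ !dotZr /p /q; lra.
have p0 : 0 <= p.
  rewrite leNgt; apply/negP => pn.
  have qp : 0 < q - p by lra.
  set l := - p / (q - p).
  have hl : l * (q - p) = - p by rewrite /l mulfVK // gt_eqF.
  have l0 : 0 < l by rewrite /l divr_gt0 // oppr_gt0.
  have l1 : l <= 1 by rewrite /l ler_pdivrMr // mul1r; lra.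
  have H := Hl l (introT andP (conj (ltW l0) l1)).
  have H2 : (q - p) * (2 * p + l * q) < 0.
    have -> : (q - p) * (2 * p + l * q) = p * (q - 2 * p).
      have -> : (q - p) * (2 * p + l * q) = 2 * p * (q - p) + (l * (q - p)) * q by ring.
      rewrite hl; ring.
    rewrite pmulr_llt0 //; lra.
  have : 0 <= 2 * p + l * q by rewrite pmulr_rge0 in H.
  rewrite pmulr_rlt0 // in H2; lra.
have key : forall n (a c : 'rV[R]_n), normsq (- a + - c) = normsq a + 2 * dot a c + normsq c.
  by move=> n a c; rewrite -opprD normsqN normsqD.
have e1 : w - u = - (w' - w) + - (u - w') by rewrite !opprB addrA addrNK.
have e2 : th - b = - (th' - th) + - (b - th') by rewrite !opprB addrA addrNK.
have e3 : w' - u = - (u - w') by rewrite opprB.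
have e4 : th' - b = - (b - th') by rewrite opprB.
rewrite e1 e2 !key e3 e4 !normsqN; move: p0; rewrite /p; lra.
Qed.

Lemma cnt_range n a b : (a <= b)%N ->
  (\sum_(j < n) ((a <= j) && (j < b) : nat) = minn b n - minn a n)%N.
Proof.
move=> ab; elim: n => [|n IH]; first by rewrite big_ord0; lia.
rewrite big_ord_recr /= IH.
case: (boolP ((a <= n) && (n < b))%N) => /= h; lia.
Qed.

Lemma maxsq (R : realFieldType) (L D : R) : L <= `|D| -> (Num.max 0 L) ^+ 2 <= D ^+ 2.
Proof.
move=> h; rewrite /Num.max; case: ifP => L0.
  rewrite -(real_normK (num_real D)).
  have D0 : 0 <= `|D| by [].
  have L0' : 0 < L by [].
  nra.
by rewrite expr0n /= sqr_ge0.
Qed.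

Lemma loss_step (R : realFieldType) d K (x : 'rV[R]_d) yl yr (w : 'rV[R]_d)
  (th : 'rV[R]_(K-1)) w' th' (M R2 : R) :
  (1 <= yl)%N -> (yl <= yr)%N -> (yr <= K)%N ->
  ((K - 1 - (yr - yl))%N%:R <= M) -> normsq x <= R2 ->
  pa_feasible x yl yr w' th' ->
  \sum_(j < K - 1) (pa_loss x yl yr w th j) ^+ 2
    <= (1 + R2 * M) * (normsq (w' - w) + normsq (th' - th)).
Proof.
move=> h1 h2 h3 hM hR Hf.
set c := fun j : 'I_(K - 1) => ((j.+1 < yl)%N || (yr <= j.+1)%N).
set a := dot (w' - w) x.
set s := fun j : 'I_(K - 1) => th' 0 j - th 0 j.
set W := normsq (w' - w).
set S := normsq (th' - th).
set r := normsq x.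
have W0 : 0 <= W := normsq_ge0 _.
have S0 : 0 <= S := normsq_ge0 _.
have r0 : 0 <= r := normsq_ge0 _.
have M0 : 0 <= M by apply: le_trans hM.
have SE : S = \sum_(j < K - 1) s j ^+ 2.
  by rewrite /S /normsq /dot; apply: eq_bigr => j _; rewrite /s !mxE expr2.
have stepA : forall j, pa_loss x yl yr w th j ^+ 2 <= (c j)%:R * (a - s j) ^+ 2.
  move=> j; rewrite /pa_loss /c /a /s dotBl.
  have [f1 f2] := Hf j.
  case: ifP => hl /=.
    rewrite mul1r; apply: maxsq; have := f1 hl => {}f1.
    apply: le_trans (ler_norm _); lra.
  case: ifP => hr /=.
    rewrite mul1r; apply: maxsq; have := f2 hr => {}f2.
    rewrite -normrN; apply: le_trans (ler_norm _); lra.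
  by rewrite expr0n /= mul0r.
set m := (\sum_(j < K - 1) (c j : nat))%N.
have hm : (m <= K - 1 - (yr - yl))%N.
  have e : (m + \sum_(j < K - 1) (((yl.-1 <= j) && (j < yr.-1)) : nat) = \sum_(j < K - 1) 1)%N.
    rewrite -big_split /=.
    apply: eq_bigr => j _; rewrite /c.
    case: (ltnP j.+1 yl) => ? /=; case: (leqP yr j.+1) => ? /=; case: (boolP ((yl.-1 <= j)%N && (j < yr.-1)%N)) => ? /=; lia.
  move: e; rewrite sum1_card card_ord cnt_range; last by lia.
  lia.
set mm : R := m%:R.
have mm0 : 0 <= mm by rewrite /mm ler0n.
have mmM : mm <= M by apply: le_trans hM; rewrite /mm ler_nat.
have cs1 : a ^+ 2 <= r * W by rewrite mulrC; apply: cs.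
have Q : forall y, 0 <= W + 2 * (y * a) + y ^+ 2 * r.
  move=> y; have := normsq_ge0 ((w' - w) + y *: x).
  by rewrite normsqD normsqZ dotZr.
have stepC : forall j, mm * ((c j)%:R * (a - s j) ^+ 2) <=
    mm * (1 + mm * r) * s j ^+ 2 + (c j)%:R * ((1 + mm * r) * W).
  move=> j; case: (c j) => /=.
    have F1 := Q (mm * s j).
    have F2 : 0 <= mm * (r * W - a ^+ 2) by apply: mulr_ge0; lra.
    rewrite !mul1r; nra.
  rewrite !mul0r mulr0 addr0; apply: mulr_ge0; last exact: sqr_ge0.
  apply: mulr_ge0 => //; have : 0 <= mm * r by apply: mulr_ge0.
  lra.
have L1 : \sum_(j < K - 1) (pa_loss x yl yr w th j) ^+ 2 <=
    \sum_(j < K - 1) (c j)%:R * (a - s j) ^+ 2 by apply: ler_sum => j _; exact: stepA.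
have L2 : \sum_(j < K - 1) (c j)%:R * (a - s j) ^+ 2 <= (1 + mm * r) * (W + S).
  case: (posnP m) => m0.
    rewrite big1; last first.
      move=> j _; move/eqP: m0; rewrite /m sum_nat_eq0 => /forall_inP/(_ j isT).
      by case: (c j) => //= _; rewrite mul0r.
    apply: mulr_ge0; last lra.
    have : 0 <= mm * r by apply: mulr_ge0.
    lra.
  have mmp : 0 < mm by rewrite /mm ltr0n.
  rewrite -(ler_pM2l mmp).
  rewrite mulr_sumr.
  apply: le_trans (ler_sum _ (fun j _ => stepC j)) _.
  rewrite big_split /= -mulr_sumr -SE -mulr_suml -natr_sum -/m -/mm.
  rewrite le_eqVlt; apply/orP; left; apply/eqP; ring.
apply: le_trans L1 (le_trans L2 _).
apply: ler_wpM2r; first lra.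
have := ler_pM mm0 r0 mmM hR; rewrite (mulrC R2); lra.
Qed.

Theorem corollary1 (R : realFieldType) (d K T : nat)
  (x : nat -> 'rV[R]_d) (yl yr : nat -> nat)
  (w : nat -> 'rV[R]_d) (th : nat -> 'rV[R]_(K - 1))
  (u : 'rV[R]_d) (b : 'rV[R]_(K - 1)) :
  (forall t, (t < T)%N -> [/\ (1 <= yl t)%N, (yl t <= yr t)%N & (yr t <= K)%N]) ->
  w 0%N = 0 -> th 0%N = 0 ->
  (forall t, (t < T)%N -> pa_step (x t) (yl t) (yr t) (w t) (th t) (w t.+1) (th t.+1)) ->
  (forall t, (t < T)%N -> forall j : 'I_(K - 1),
      ((j.+1 < yl t)%N -> dot u (x t) - b 0 j >= 1) /\
      ((yr t <= j.+1)%N -> dot u (x t) - b 0 j <= -1)) ->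
  let c : nat := \big[minn/K]_(t < T) (yr t - yl t)%N in
  let R2 : R := \big[Num.max/0]_(t < T) normsq (x t) in
  \sum_(t < T) \sum_(j < K - 1) (pa_loss (x t) (yl t) (yr t) (w t) (th t) j) ^+ 2
    <= (normsq u + normsq b) * (1 + R2 * (K%:R - c%:R - 1)).
Proof.
move=> Hy hw0 hth0 Hstep Hu /=.
set c := \big[minn/K]_(t < T) _.
set R2 := \big[Num.max/0]_(t < T) _.
set M : R := K%:R - c%:R - 1.
set D := fun t => normsq (w t.+1 - w t) + normsq (th t.+1 - th t).
set dist := fun t => normsq (w t - u) + normsq (th t - b).
have nub0 : 0 <= normsq u + normsq b.
  have := normsq_ge0 u; have := normsq_ge0 b; lra.
have D0 : forall t, 0 <= D t.
  move=> t; have := normsq_ge0 (w t.+1 - w t); have := normsq_ge0 (th t.+1 - th t).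
  rewrite /D; lra.
case: (posnP T) => T0.
  subst T; rewrite big_ord0 /R2 big_ord0 mul0r addr0 mulr1 //.
have R20 : 0 <= R2 by rewrite /R2 bigmax_ge_id.
have cle : forall t : 'I_T, (c <= yr t - yl t)%N.
  move=> t; rewrite /c.
  exact: (bigmin_le K t (fun t : 'I_T => (yr t - yl t)%N)).
have hM : forall t : 'I_T, (K - 1 - (yr t - yl t))%N%:R <= M.
  move=> t; have [h1 h2 h3] := Hy t (ltn_ord t).
  have hn : (K - 1 - (yr t - yl t) + c + 1 <= K)%N by have := cle t; lia.
  have := hn; rewrite -(ler_nat R) !natrD /M; lra.
have M0 : 0 <= M by apply: le_trans (hM (Ordinal T0)).
have per : forall t : 'I_T,
    \sum_(j < K - 1) (pa_loss (x t) (yl t) (yr t) (w t) (th t) j) ^+ 2 <= (1 + R2 * M) * D t.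
  move=> t; have [h1 h2 h3] := Hy t (ltn_ord t).
  apply: loss_step => //.
    exact: (le_bigmax 0 (fun t : 'I_T => normsq (x t)) t).
  by case: (Hstep t (ltn_ord t)).
have tele : forall n, (n <= T)%N -> \sum_(t < n) D t + dist n <= dist 0%N.
  elim=> [|n IH] hn; first by rewrite big_ord0 add0r.
  rewrite big_ord_recr /=.
  have := IH (ltnW hn).
  have := proj_step (Hstep n hn) (Hu n hn).
  rewrite /dist /D; lra.
have := tele T (leqnn T).
have -> : dist 0%N = normsq u + normsq b by rewrite /dist hw0 hth0 !sub0r !normsqN.
have : 0 <= dist T by rewrite /dist; have := normsq_ge0 (w T - u); have := normsq_ge0 (th T - b); lra.
move=> dT hsum.
apply: le_trans (ler_sum _ (fun t _ => per t)) _.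
rewrite -mulr_sumr mulrC; apply: ler_wpM2r.
  have := mulr_ge0 R20 M0; lra.
lra.
Qed.
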